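(* Let $T$ be a transitive tournament with $n$ vertices and let $k$ be a nonnegative integer. Then $T$ has at most $A\cdot\exp(C\sqrt{k})\cdot(n+1)$ $k$-cuts, where $C=\pi\sqrt{2/3}$ and $A$ is a constant such that the partition numbers satisfy $p(m)\le \frac{A}{m+1}\exp(C\sqrt{m})$ for every nonnegative integer $m$.
   Context: A transitive tournament with ordering $(v_1,\dots,v_n)$ is the tournament on $\{v_1,\dots,v_n\}$ in which $(v_i,v_j)$ is an arc iff $i<j$. A $k$-cut of a digraph $T$ is an ordered partition $(X,Y)$ of $V(T)$ (either part may be empty) such that there are at most $k$ arcs $(u,v)\in E(T)$ with $u\in Y$ and $v\in X$. The partition number $p(m)$ is the number of multisets of positive integers summing to $m$. It is known (Hardy–Ramanujan) that there is an absolute constant $A$ with $p(m)\le\frac{A}{m+1}\exp(\pi\sqrt{2/3}\sqrt{m})$ for all $m\ge 0$. *)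

(* Defs.v *)
From Stdlib Require Import Reals.
From mathcomp Require Import all_boot.

Set Implicit Arguments.
Unset Strict Implicit.
Unset Printing Implicit Defensive.

Definition transitive_tournament_with_ordering (V : finType) (E : rel V) (s : seq V) : Prop :=
  [/\ uniq s, (forall x : V, x \in s) & (forall u w : V, E u w = (index u s < index w s))].

Definition is_transitive_tournament (V : finType) (E : rel V) : Prop :=
  exists s : seq V, transitive_tournament_with_ordering E s.

Definition back_arcs (V : finType) (E : rel V) (X Y : {set V}) : nat :=
  #|[set p : V * V | [&& E p.1 p.2, p.1 \in Y & p.2 \in X]]|.

Definition is_kcut (V : finType) (E : rel V) (k : nat) (X Y : {set V}) : bool :=
  [&& X :|: Y == [set: V], X :&: Y == set0 & back_arcs E X Y <= k].

Definition num_kcuts (V : finType) (E : rel V) (k : nat) : nat :=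
  #|[set XY : {set V} * {set V} | is_kcut E k XY.1 XY.2]|.

(* A multiset is encoded by its multiplicity function: f i = multiplicity of the
   part i+1 (parts are at most m and multiplicities at most m, so these bounds
   lose nothing). *)
Definition partition_number (m : nat) : nat :=
  #|[set f : {ffun 'I_m -> 'I_m.+1} | \sum_(i < m) (i.+1 * f i) == m]|.

(* Main.v *)
Require Import Defs.
From mathcomp Require Import all_boot.
From Stdlib Require Import Reals.
Set Implicit Arguments. Unset Strict Implicit.

Fixpoint inv (b : seq bool) : nat :=
  if b is x :: b0 then (if x then count negb b0 else 0) + inv b0 else 0.
Fixpoint mu (b : seq bool) (i : nat) : nat :=
  if b is x :: b0 then (x && (count negb b0 == i.+1)) + mu b0 i else 0.

Lemma mu0 b i : count negb b <= i -> mu b i = 0.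
Proof.
elim: b => [//|x b0 IH] /= H.
rewrite IH; last by apply: leq_trans H; apply: leq_addl.
case: x H => //= H; rewrite addn0.
by have -> : (count negb b0 == i.+1) = false by apply/eqP => E; move: H; rewrite E ltnn.
Qed.

Lemma mu_inv b i : inv b <= i -> mu b i = 0.
Proof.
elim: b => [//|x b0 IH] /= H.
rewrite IH; last by apply: leq_trans H; apply: leq_addl.
case: x H => //= H.
have -> : (count negb b0 == i.+1) = false.
  by apply/eqP => E; move: H; rewrite E addSn ltnNge leq_addr.
by [].
Qed.

Lemma mu_bound b i : mu b i <= inv b.
Proof.
elim: b => [//|x b0 IH] /=.
apply: leq_add => //.
case: x => //=. case: eqP => // ->. by [].
Qed.

Lemma sum_ind c N : \sum_(i < N) i.+1 * (c == i.+1) = c * (c <= N).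
Proof.
elim: N => [|N IH]; first by rewrite big_ord0; case: c => [|c]; rewrite ?muln0.
rewrite big_ord_recr /= IH.
case: (ltngtP c N.+1) => H.
- by rewrite ltnS in H; rewrite H muln0 addn0.
- have -> : (c <= N) = false by apply/negbTE; rewrite -ltnNge ltnW.
  by rewrite !muln0.
- by rewrite H ltnn !muln1 muln0.
Qed.

Lemma mu_sum b N : count negb b <= N -> \sum_(i < N) i.+1 * mu b i = inv b.
Proof.
elim: b => [|x b0 IH] /= H; first by rewrite big1 // => i _; rewrite muln0.
under eq_bigr => i _ do rewrite mulnDr.
rewrite big_split /= IH; last by apply: leq_trans H; apply: leq_addl.
congr (_ + _).
case: x H => /= H.
- by rewrite sum_ind H muln1.
- by rewrite big1 // => i _; rewrite muln0.
Qed.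

Lemma head_det x b0 : x = (count negb (x :: b0) == 0) || (0 < mu (x :: b0) (count negb (x :: b0)).-1).
Proof.
case: x => /=.
- case: (count negb b0) => //= c. by rewrite eqxx.
- by rewrite !add0n mu0.
Qed.

Lemma mu_inj b b' : size b = size b' -> count negb b = count negb b' -> mu b =1 mu b' -> b = b'.
Proof.
elim: b b' => [|x b0 IH] [|x' b0'] // Hs Hc Hm.
have Ex : x = x'.
  rewrite (head_det x b0) (head_det x' b0').
  have -> : count negb (x :: b0) = count negb (x' :: b0') by [].
  by rewrite Hm.
subst x'.
have Hc' : count negb b0 = count negb b0' by move: Hc => /= /eqP; rewrite eqn_add2l => /eqP.
congr (_ :: _); apply: IH.
- by case: Hs.
- by [].
- move=> i; move: (Hm i) => /=; rewrite Hc' => /eqP; rewrite eqn_add2l => /eqP //.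
Qed.
Fixpoint pinv (T : Type) (F : T -> T -> nat) (t : seq T) : nat :=
  if t is v :: t0 then \sum_(w <- t0) F v w + pinv F t0 else 0.

Lemma index_cons_in (T : eqType) (v w : T) t0 : w \in t0 -> v \notin t0 ->
  index w (v :: t0) = (index w t0).+1.
Proof.
move=> Hw Hv /=. case: eqP => // E. by move: Hv; rewrite E Hw.
Qed.

Lemma neq_in (T : eqType) (v w : T) (t0 : seq T) : w \in t0 -> v \notin t0 -> (v == w) = false.
Proof. move=> Hw Hv; apply/eqP => E; move: Hv; by rewrite E Hw. Qed.

Lemma sum_pairs (T : eqType) (t : seq T) (F : T -> T -> nat) : uniq t ->
  \sum_(u <- t) \sum_(w <- t) (index u t < index w t) * F u w = pinv F t.
Proof.
elim: t => [|v t0 IH]; first by rewrite big_nil.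
move=> /= /andP [Hv Hu].
rewrite big_cons /= eqxx big_cons /= eqxx ltnn mul0n add0n.
rewrite -IH //; congr (_ + _).
- apply: eq_big_seq => w Hw. by rewrite (neq_in Hw Hv) mul1n.
- apply: eq_big_seq => u Hu'.
  rewrite big_cons (neq_in Hu' Hv) eqxx /= add0n.
  apply: eq_big_seq => w Hw. by rewrite (neq_in Hw Hv).
Qed.

Lemma pinv_inv (T : eqType) (Y : pred T) t :
  pinv (fun u w => Y u * ~~ Y w) t = inv [seq Y u | u <- t].
Proof.
elim: t => [//|v t0 IH] /=. rewrite IH; congr (_ + _).
rewrite count_map. case: (Y v) => /=.
- rewrite -sum1_count [RHS]big_mkcond /=; apply: eq_bigr => w _. by rewrite mul1n; case: (Y w).
- by rewrite big1.
Qed.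

Lemma back_inv (V : finType) (E : rel V) s (Y : {set V}) :
  transitive_tournament_with_ordering E s ->
  back_arcs E (~: Y) Y = inv [seq v \in Y | v <- s].
Proof.
case=> Hu Hall HE. rewrite /back_arcs -sum1dep_card big_mkcond /=.
transitivity (\sum_(p : V * V) (index p.1 s < index p.2 s) * ((p.1 \in Y) * ~~ (p.2 \in Y))).
  apply: eq_bigr => [[u w]] _ /=. rewrite HE in_setC.
  by case: (_ < _); case: (u \in Y); case: (w \in Y).
have -> : \sum_(p : V * V) (index p.1 s < index p.2 s) * ((p.1 \in Y) * ~~ (p.2 \in Y))
   = \sum_(u : V) \sum_(w : V) (index u s < index w s) * ((u \in Y) * ~~ (w \in Y)).
  by rewrite pair_big.
have Hperm : perm_eq (index_enum V) s.
  apply: uniq_perm => //; first exact: index_enum_uniq.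
  by move=> x; rewrite mem_index_enum Hall.
rewrite (perm_big _ Hperm).
under eq_bigr => u _ do rewrite (perm_big _ Hperm).
rewrite (sum_pairs (fun u w => (u \in Y) * ~~ (w \in Y)) Hu).
exact: (pinv_inv (fun v => v \in Y)).
Qed.

Lemma mu_sum' b N : inv b <= N -> \sum_(i < N) i.+1 * mu b i = inv b.
Proof.
move=> H.
rewrite -(@mu_sum b (N + count negb b)) ?leq_addl //.
rewrite -!(big_mkord xpredT (fun i => i.+1 * mu b i)).
rewrite [RHS](@big_cat_nat _ _ _ N) ?leq_addr //=.
rewrite [X in _ = _ + X]big1_seq ?addn0 // => i; rewrite mem_iota => /and3P[_ Hi _].
by rewrite mu_inv ?muln0 // (leq_trans H Hi).
Qed.

Lemma sum_first k c : \sum_(i < k) i.+1 * ((i == 0 :> nat) * c) = (0 < k) * c.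
Proof.
case: k => [|k]; first by rewrite big_ord0.
rewrite big_ord_recl /= big1 ?addn0 ?mul1n // => i _.
by rewrite /bump /= add1n /= mul0n muln0.
Qed.

Lemma count_cuts (V : finType) (E : rel V) k s :
  transitive_tournament_with_ordering E s ->
  num_kcuts E k <= (size s).+1 * k.+1 * partition_number k.
Proof.
move=> Ht. have Ht' := Ht; case: Ht' => Hu Hall HE.
set P := [set f : {ffun 'I_k -> 'I_k.+1} | \sum_(i < k) (i.+1 * f i) == k].
set n := size s.
pose bits (XY : {set V} * {set V}) := [seq v \in XY.2 | v <- s].
pose h (XY : {set V} * {set V}) : ('I_n.+1 * 'I_k.+1) * {ffun 'I_k -> 'I_k.+1} :=
  ((inord (count negb (bits XY)), inord (inv (bits XY))),
   [ffun i : 'I_k => inord (mu (bits XY) i + (i == 0 :> nat) * (k - inv (bits XY)))]).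
set K := [set XY : {set V} * {set V} | is_kcut E k XY.1 XY.2].
have kcutE : forall XY, XY \in K -> XY.1 = ~: XY.2 /\ inv (bits XY) <= k.
  move=> [X Y]; rewrite inE /is_kcut /= => /and3P [/eqP HU /eqP HI Hb].
  have HX : X = ~: Y.
    apply/setP => v; rewrite in_setC.
    have : v \in X :|: Y by rewrite HU inE.
    rewrite in_setU. case HvX: (v \in X); case HvY: (v \in Y) => //= _.
    have : v \in X :&: Y by rewrite in_setI HvX HvY.
    by rewrite HI inE.
  split => //. by rewrite /bits /= -(back_inv _ Ht) -HX.
have Hbnd : forall b (i : nat), inv b <= k -> mu b i + (i == 0 :> nat) * (k - inv b) < k.+1.
  move=> b i Hk; rewrite ltnS -{2}(subnKC Hk); apply: leq_add; first exact: mu_bound.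
  by case: (i == 0); rewrite ?mul1n ?mul0n.
have Hinj : {in K &, injective h}.
  move=> XY1 XY2 H1 H2 Heq.
  have [HX1 Hk1] := kcutE _ H1. have [HX2 Hk2] := kcutE _ H2.
  move: Heq; rewrite /h => -[Hc Hi Hf].
  have Hc' : count negb (bits XY1) = count negb (bits XY2).
    move: Hc => /(congr1 val). rewrite /= !inordK //; rewrite ltnS;
      (apply: leq_trans (count_size _ _) _; by rewrite size_map).
  have Hi' : inv (bits XY1) = inv (bits XY2).
    by move: Hi => /(congr1 val); rewrite /= !inordK.
  have Hb : bits XY1 = bits XY2.
    apply: mu_inj => //; first by rewrite !size_map.
    move=> i; case: (ltnP i k) => Hik.
    - move/ffunP: Hf => /(_ (Ordinal Hik)) /(congr1 val).
      rewrite !ffunE /= !inordK ?Hbnd // Hi'. by move/addIn.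
    - by rewrite !mu_inv // ?(leq_trans Hk1 Hik) ?(leq_trans Hk2 Hik).
  have HY : XY1.2 = XY2.2.
    apply/setP => v. exact: ((eq_in_map _ _ s).2 Hb v (Hall v)).
  clear -HX1 HX2 HY; move: HX1 HX2 HY; case: XY1 => X1 Y1; case: XY2 => X2 Y2 /=.
  by move=> -> -> ->.
rewrite /num_kcuts -/K -(card_in_imset Hinj).
apply: leq_trans (subset_leq_card (_ : _ \subset setX [set: 'I_n.+1 * 'I_k.+1] P)) _.
  apply/subsetP => _ /imsetP [XY HK ->].
  have [_ Hk] := kcutE _ HK.
  rewrite inE /= inE andTb inE.
  under eq_bigr => i _ do rewrite ffunE inordK ?Hbnd // mulnDr.
  rewrite big_split /= mu_sum' //.
  rewrite sum_first.
  case: (posnP k) Hk => [->|Hk0] Hk.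
    by rewrite addn0; move: Hk; rewrite leqn0.
  by rewrite mul1n subnKC.
by rewrite cardsX cardsT card_prod !card_ord.
Qed.

Theorem mainTheorem7 (V : finType) (E : rel V) (k : nat) (A : R) :
  is_transitive_tournament E ->
  (forall m : nat,
     (INR (partition_number m)
      <= A / INR (m + 1) * exp (PI * sqrt (2 / 3) * sqrt (INR m)))%R) ->
  (INR (num_kcuts E k)
   <= A * exp (PI * sqrt (2 / 3) * sqrt (INR k)) * INR (#|V| + 1))%R.
Proof.
move=> [s Ht] Hp.
have Hn : #|V| = size s.
  case: Ht => Hu Hall _.
  rewrite -(card_uniqP Hu). apply: eq_card => x. by rewrite Hall.
have Hc := count_cuts k Ht.
set Ex := exp _.
have Hpk := Hp k.
have HN : forall a b : nat, a <= b -> (INR a <= INR b)%R.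
  by move=> a b /leP; apply: le_INR.
apply: Rle_trans (HN _ _ Hc) _.
have -> : INR ((size s).+1 * k.+1 * partition_number k)
   = (INR (#|V| + 1) * INR (k + 1) * INR (partition_number k))%R.
  rewrite Hn !addn1. rewrite -!mult_INR. by [].
have Hk0 : (0 < INR (k + 1))%R by apply: lt_0_INR; apply/ltP; rewrite addn1.
have HV0 : (0 <= INR (#|V| + 1))%R by apply: pos_INR.
apply: Rle_trans (Rmult_le_compat_l _ _ _ (Rmult_le_pos _ _ HV0 (Rlt_le _ _ Hk0)) Hpk) _.
right. rewrite /Ex. field. by apply: Rgt_not_eq.
Qed.
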